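(* Let $\alpha>1$ and $k\ge 0$ be an integer. Let $P\subset\mathbb{R}^1$ be a finite point set containing the source $s$ and let $q\in\mathbb{R}^1$ be a point with $q\notin P$. Let $\rho_{\mathrm{old}}(p)$ be the range of a point $p$ in the canonical range assignment $\rho_k(P)$ and let $\rho_{\mathrm{new}}(p)$ be the range of $p$ in $\rho_k(P\cup\{q\})$ (with the range of a point not in the set being $0$). Then $$\big|\{p\in P\cup\{q\}:\rho_{\mathrm{new}}(p)>\rho_{\mathrm{old}}(p)\}\big|\le k+3\quad\text{and}\quad \big|\{p\in P\cup\{q\}:\rho_{\mathrm{new}}(p)<\rho_{\mathrm{old}}(p)\}\big|\le k+3.$$
   Context: Setting: points in $\mathbb{R}^1$ with distance $|pq|$; a range assignment $\rho$ on a finite set $P$ containing source $s$ induces the directed graph with edge $(p,q)$ iff $|pq|\le\rho(p)$; it is feasible if this graph contains an arborescence rooted at $s$ spanning $P$; its cost is $\sum_p\rho(p)^\alpha$ with $\alpha>1$. Write $P=L\cup\{s\}\cup R$, where $L=\{\ell_1,\dots,\ell_{|L|}\}$ are the points left of $s$ and $R=\{r_1,\dots,r_{|R|}\}$ the points right of $s$, each numbered by increasing distance from $s$. $\ell_{|L|}$ and $r_{|R|}$ are extreme points. The successor of $r_i$ (non-extreme) is $r_{i+1}$, of $\ell_i$ is $\ell_{i+1}$; $s$ has successors $r_1$ and $\ell_1$; extreme points have no successor. A chain is a path in the communication graph using only edges from a point to its successor. The standard range $\rho_{\mathrm{st}}(p)$ of a non-extreme $p\neq s$ is its distance to its successor;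 of an extreme point it is $0$; $s$ has the two standard ranges $|s\ell_1|,|sr_1|$. A zero-range point is a non-extreme point with range $0$. For a broadcast tree $\mathcal{B}$ (arborescence rooted at $s$), a point of $R\cup L$ is root-crossing if it has a child on the other side of $s$; $s$ is root-crossing if it has a child in $L$ and one in $R$. Structured optimal assignment $\rho_{\mathrm{opt}}$: if all points of $P\setminus\{s\}$ lie on one side of $s$, $\rho_{\mathrm{opt}}$ gives each point its standard range (a chain from $s$ to the extreme point); otherwise $\rho_{\mathrm{opt}}$ is a minimum-cost feasible assignment whose graph contains a broadcast tree $\mathcal{B}$ with: a single root-crossing point $p^*$; a chain from $s$ to $p^*$; all points within reach of $p^*$ (i.e. at distance $\le\rho_{\mathrm{opt}}(p^* )$), except those on the chain from $s$ to $p^*$, are children of $p^*$; and, with $r_i,\ell_j$ the rightmost and leftmost points within reach of $p^*$, chains from $r_i$ to $r_{|R|}$ and from $\ell_j$ to $\ell_{|L|}$ (such an optimal assignment always exists). For each point set a fixed such $\rho_{\mathrm{opt}}$ is used. Canonical range assignment $\rho_k$: if all points of $P$ lie on one side of $s$, $\rho_k=\rho_{\mathrm{opt}}$. Otherwise let $Z$ be the set of zero-range points in $\rho_{\mathrm{opt}}(P)$; let $Z_k=Z$ if $|Z|\le k$, and otherwise let $Z_k\subseteq Z$ be the $k$ points of $Z$ with largest standard ranges (ties broken arbitrarily). Then $\rho_k(p)=\rho_{\mathrm{opt}}(p)$ for $p\in P\setminus Z$, $\rho_k(p)=0$ for $p\in Z_k$, and $\rho_k(p)=\rho_{\mathrm{st}}(p)$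 for $p\in Z\setminus Z_k$. *)

(* Defs.v *)
(* points of R^1 are Stdlib reals; finite point sets are
   duplicate-free lists. *)
From Stdlib Require Import Reals List Lra.
Import ListNotations.
Open Scope R_scope.

(* x^alpha for a range x >= 0 (with 0^alpha = 0, as alpha > 1). *)
Definition pw (a x : R) : R := if Rle_dec x 0 then 0 else Rpower x a.

Definition cost (a : R) (P : list R) (rho : R -> R) : R :=
  fold_right (fun p acc => pw a (rho p) + acc) 0 P.

Definition range_assignment (P : list R) (rho : R -> R) : Prop :=
  forall p, In p P -> 0 <= rho p.

(* A broadcast tree (arborescence rooted at s spanning P) contained in the
   communication graph of rho, given by its parent function:
   every p <> s in P has a parent par p in P, the edge (par p, p) is in the
   graph, and following parents from p reaches s. *)
Definition is_tree (P : list R) (s : R) (rho : R -> R) (par : R -> R) : Prop :=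
  forall p, In p P -> p <> s ->
    In (par p) P /\ Rabs (p - par p) <= rho (par p) /\
    exists n : nat, Nat.iter n par p = s.

Definition feasible (P : list R) (s : R) (rho : R -> R) : Prop :=
  exists par, is_tree P s rho par.

Definition min_cost (a : R) (P : list R) (s : R) (rho : R -> R) : Prop :=
  range_assignment P rho /\ feasible P s rho /\
  forall rho', range_assignment P rho' -> feasible P s rho' ->
    cost a P rho <= cost a P rho'.

Definition next_right (P : list R) (p x : R) : Prop :=
  In x P /\ p < x /\ forall y, In y P -> p < y -> x <= y.
Definition next_left (P : list R) (p x : R) : Prop :=
  In x P /\ x < p /\ forall y, In y P -> y < p -> y <= x.

Definition succ (P : list R) (s p x : R) : Prop :=
  (s <= p /\ next_right P p x) \/ (p <= s /\ next_left P p x).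

Definition extreme (P : list R) (s p : R) : Prop :=
  In p P /\ p <> s /\ forall x, ~ succ P s p x.

(* r is a standard range of p (unique for p <> s; s may have two) *)
Definition std (P : list R) (s p r : R) : Prop :=
  (exists x, succ P s p x /\ r = Rabs (x - p)) \/
  ((forall x, ~ succ P s p x) /\ r = 0).

Definition one_sided (P : list R) (s : R) : Prop :=
  (forall p, In p P -> s <= p) \/ (forall p, In p P -> p <= s).

Definition child (P : list R) (s : R) (par : R -> R) (x c : R) : Prop :=
  In c P /\ c <> s /\ par c = x.

Definition root_crossing (P : list R) (s : R) (par : R -> R) (x : R) : Prop :=
  (x < s /\ exists c, child P s par x c /\ s < c) \/
  (s < x /\ exists c, child P s par x c /\ c < s) \/
  (x = s /\ (exists c, child P s par x c /\ c < s)
         /\ (exists c, child P s par x c /\ s < c)).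

Definition between (u v x : R) : Prop := Rmin u v <= x <= Rmax u v.

Definition structured_opt (a : R) (P : list R) (s : R) (rho : R -> R) : Prop :=
  (one_sided P s -> forall p, In p P -> std P s p (rho p)) /\
  (~ one_sided P s ->
    min_cost a P s rho /\
    exists (par : R -> R) (pstar : R),
      is_tree P s rho par /\ In pstar P /\
      root_crossing P s par pstar /\
      (forall x, In x P -> root_crossing P s par x -> x = pstar) /\
      (* chain from s to pstar *)
      (forall x y, In x P -> x <> s -> between s pstar x -> succ P s y x ->
         par x = y) /\
      (forall x, In x P -> Rabs (x - pstar) <= rho pstar ->
         ~ between s pstar x -> par x = pstar) /\
      exists ri lj,
        In ri P /\ Rabs (ri - pstar) <= rho pstar /\
        (forall x, In x P -> Rabs (x - pstar) <= rho pstar -> x <= ri) /\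
        In lj P /\ Rabs (lj - pstar) <= rho pstar /\
        (forall x, In x P -> Rabs (x - pstar) <= rho pstar -> lj <= x) /\
        (* chains from ri to the right extreme point, lj to the left one *)
        (forall x y, In x P -> ri < x -> succ P s y x -> par x = y) /\
        (forall x y, In x P -> x < lj -> succ P s y x -> par x = y)).

(* zero-range point of rho (s never has range 0 in a feasible two-sided
   assignment, so it is excluded explicitly) *)
Definition zero_range (P : list R) (s : R) (rho : R -> R) (p : R) : Prop :=
  In p P /\ p <> s /\ ~ extreme P s p /\ rho p = 0.

(* rho is (a) canonical range assignment rho_k(P) (range 0 outside P),
   for some fixed structured optimal assignment and tie-breaking. *)
Definition canonical (a : R) (k : nat) (P : list R) (s : R) (rho : R -> R)
  : Prop :=
  exists rhoopt : R -> R,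
    structured_opt a P s rhoopt /\
    (forall p, ~ In p P -> rho p = 0) /\
    (one_sided P s -> forall p, In p P -> rho p = rhoopt p) /\
    (~ one_sided P s ->
      exists Zk : list R,
        NoDup Zk /\ (forall p, In p Zk -> zero_range P s rhoopt p) /\
        (((forall p, zero_range P s rhoopt p -> In p Zk) /\ (length Zk <= k)%nat)
         \/
         (length Zk = k /\
          forall p p' r r', In p Zk -> zero_range P s rhoopt p' -> ~ In p' Zk ->
            std P s p r -> std P s p' r' -> r' <= r)) /\
        (forall p, In p P ->
           (~ zero_range P s rhoopt p -> rho p = rhoopt p) /\
           (In p Zk -> rho p = 0) /\
           (zero_range P s rhoopt p -> ~ In p Zk -> std P s p (rho p)))).

Definition count_lt (f g : R -> R) (S : list R) : nat :=
  length (filter (fun p => if Rlt_dec (f p) (g p) then true else false) S).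

(* Main.v *)
Require Import Defs.
From Stdlib Require Import Reals List Lra Lia Classical.
Import ListNotations.
Open Scope R_scope.

Ltac rabs := unfold Rabs in *; repeat match goal with
  | |- context [Rcase_abs ?x] => destruct (Rcase_abs x)
  | H : context [Rcase_abs ?x] |- _ => destruct (Rcase_abs x) end; lra.

Lemma pw_nonneg a x : 0 <= pw a x.
Proof. unfold pw; destruct (Rle_dec x 0); [lra|]. unfold Rpower; left; apply exp_pos. Qed.

Lemma pw_lt a x y : 0 < a -> 0 <= x -> x < y -> pw a x < pw a y.
Proof.
  intros Ha Hx Hxy. unfold pw.
  destruct (Rle_dec x 0), (Rle_dec y 0); try lra.
  - unfold Rpower; apply exp_pos.
  - unfold Rpower; apply exp_increasing. apply Rmult_lt_compat_l; auto.
    apply ln_increasing; lra.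
Qed.

Lemma pw_le a x y : 0 < a -> 0 <= x -> x <= y -> pw a x <= pw a y.
Proof.
  intros Ha Hx Hxy. destruct (Req_dec x y) as [->|]; [lra|].
  left; apply pw_lt; auto; lra.
Qed.

Lemma cost_le a L r r' : 0 < a -> (forall y, In y L -> 0 <= r' y <= r y) ->
  cost a L r' <= cost a L r.
Proof.
  intros Ha; induction L as [|b L IH]; intros H; simpl; [lra|].
  assert (pw a (r' b) <= pw a (r b)) by (apply pw_le; auto; apply H; left; auto).
  assert (cost a L r' <= cost a L r) by (apply IH; intros; apply H; right; auto).
  lra.
Qed.

Lemma cost_lt a L r r' x : 0 < a -> (forall y, In y L -> 0 <= r' y <= r y) ->
  In x L -> r' x < r x -> cost a L r' < cost a L r.
Proof.
  intros Ha; induction L as [|b L IH]; intros H Hx Hlt; simpl; [destruct Hx|].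
  destruct Hx as [<-|Hx].
  - assert (pw a (r' b) < pw a (r b)) by (apply pw_lt; auto; apply H; left; auto).
    assert (cost a L r' <= cost a L r) by (apply cost_le; auto; intros; apply H; right; auto).
    lra.
  - assert (pw a (r' b) <= pw a (r b)) by (apply pw_le; auto; apply H; left; auto).
    assert (cost a L r' < cost a L r) by (apply IH; auto; intros; apply H; right; auto).
    lra.
Qed.

Lemma list_max (L : list R) (Pr : R -> Prop) : (exists z, In z L /\ Pr z) ->
  exists m, In m L /\ Pr m /\ forall z, In z L -> Pr z -> z <= m.
Proof.
  induction L as [|a L IH]; intros [z [Hz Pz]]; [destruct Hz|].
  destruct (classic (exists z, In z L /\ Pr z)) as [H|H].
  - destruct (IH H) as [m [Hm [Pm Hmax]]].
    destruct (classic (Pr a /\ m < a)) as [[Pa Ha]|Ha].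
    + exists a. split; [left; auto|]. split; auto.
      intros z0 [<-|Hz0] Pz0; [lra|]. specialize (Hmax z0 Hz0 Pz0); lra.
    + exists m. split; [right; auto|]. split; auto.
      intros z0 Hz0 Pz0; destruct (Rle_dec z0 m); auto; destruct Hz0 as [<-|Hz0];
      [exfalso; apply Ha; split; auto; lra | specialize (Hmax z0 Hz0 Pz0); lra].
  - destruct Hz as [<-|Hz].
    + exists a. split; [left;auto|]. split; auto. intros z0 [<-|Hz0] Pz0; [lra|].
      exfalso; apply H; eauto.
    + exfalso; apply H; eauto.
Qed.

Lemma list_min (L : list R) (Pr : R -> Prop) : (exists z, In z L /\ Pr z) ->
  exists m, In m L /\ Pr m /\ forall z, In z L -> Pr z -> m <= z.
Proof.
  induction L as [|a L IH]; intros [z [Hz Pz]]; [destruct Hz|].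
  destruct (classic (exists z, In z L /\ Pr z)) as [H|H].
  - destruct (IH H) as [m [Hm [Pm Hmax]]].
    destruct (classic (Pr a /\ a < m)) as [[Pa Ha]|Ha].
    + exists a. split; [left; auto|]. split; auto.
      intros z0 [<-|Hz0] Pz0; [lra|]. specialize (Hmax z0 Hz0 Pz0); lra.
    + exists m. split; [right; auto|]. split; auto.
      intros z0 Hz0 Pz0; destruct (Rle_dec m z0); auto; destruct Hz0 as [<-|Hz0];
      [exfalso; apply Ha; split; auto; lra | specialize (Hmax z0 Hz0 Pz0); lra].
  - destruct Hz as [<-|Hz].
    + exists a. split; [left;auto|]. split; auto. intros z0 [<-|Hz0] Pz0; [lra|].
      exfalso; apply H; eauto.
    + exfalso; apply H; eauto.
Qed.

Lemma succ_side L s p x : succ L s p x ->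
  In x L /\ ((s <= p /\ p < x) \/ (p <= s /\ x < p)).
Proof. intros [[H [H1 [H2 H3]]]|[H [H1 [H2 H3]]]]; split; auto. Qed.

Lemma succ_neq_s L s p x : succ L s p x -> x <> s.
Proof. intros H; apply succ_side in H; destruct H as [_ H]; lra. Qed.

Lemma succ_unique L s p x y : p <> s -> succ L s p x -> succ L s p y -> x = y.
Proof.
  intros Hps [[H [H1 [H2 H3]]]|[H [H1 [H2 H3]]]] [[G [G1 [G2 G3]]]|[G [G1 [G2 G3]]]];
  try lra.
  - specialize (H3 y G1 G2); specialize (G3 x H1 H2); lra.
  - specialize (H3 y G1 G2); specialize (G3 x H1 H2); lra.
Qed.

Lemma succ_unique_side L s p x y : succ L s p x -> succ L s p y ->
  ((p < x /\ p < y) \/ (x < p /\ y < p)) -> x = y.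
Proof.
  intros [[H [H1 [H2 H3]]]|[H [H1 [H2 H3]]]] [[G [G1 [G2 G3]]]|[G [G1 [G2 G3]]]] Hs;
  try lra.
  - specialize (H3 y G1 G2); specialize (G3 x H1 H2); lra.
  - specialize (H3 y G1 G2); specialize (G3 x H1 H2); lra.
Qed.

Lemma std_unique L s p t1 t2 : p <> s -> std L s p t1 -> std L s p t2 -> t1 = t2.
Proof.
  intros Hps [[x [Hx ->]]|[Hn ->]] [[y [Hy ->]]|[Hm ->]].
  - rewrite (succ_unique L s p x y); auto.
  - exfalso; apply (Hm x); auto.
  - exfalso; apply (Hn y); auto.
  - auto.
Qed.

Lemma std_exists L s p : exists t, std L s p t /\ 0 <= t.
Proof.
  destruct (classic (exists x, succ L s p x)) as [[x Hx]|Hn].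
  - exists (Rabs (x - p)). split; [left; eauto|apply Rabs_pos].
  - exists 0. split; [right; split; auto|lra].
    intros x Hx; apply Hn; eauto.
Qed.

Lemma exists_next_right L p y : In y L -> p < y -> exists x, next_right L p x.
Proof.
  intros Hy Hpy. destruct (list_min L (fun z => p < z)) as [m [Hm [Pm Hmin]]]; eauto.
  exists m; repeat split; auto.
Qed.

Lemma exists_next_left L p y : In y L -> y < p -> exists x, next_left L p x.
Proof.
  intros Hy Hpy. destruct (list_max L (fun z => z < p)) as [m [Hm [Pm Hmin]]]; eauto.
  exists m; repeat split; auto.
Qed.

Lemma exists_pred L s c : In s L -> In c L -> c <> s ->
  exists y, In y L /\ succ L s y c.
Proof.
  intros Hs Hc Hcs. destruct (Rtotal_order c s) as [Hlt|[Heq|Hgt]]; [|contradiction|].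
  - destruct (list_min L (fun z => c < z /\ z <= s)) as [m [Hm [[Pm1 Pm2] Hmin]]].
    { exists s; split; auto; lra. }
    exists m; split; auto. right. split; auto. repeat split; auto.
    intros z Hz Hzm. destruct (Rle_dec z c); auto.
    specialize (Hmin z Hz ltac:(split; lra)); lra.
  - destruct (list_max L (fun z => s <= z /\ z < c)) as [m [Hm [[Pm1 Pm2] Hmax]]].
    { exists s; split; auto; lra. }
    exists m; split; auto. left. split; auto. repeat split; auto.
    intros z Hz Hzm. destruct (Rle_dec c z); auto.
    specialize (Hmax z Hz ltac:(split; lra)); lra.
Qed.

Lemma pred_unique L s w w' x : w <> s -> w' <> s ->
  In w L -> In w' L -> succ L s w x -> succ L s w' x -> w = w'.
Proof.
  intros H1 H2 Hw Hw' [[H [G1 [G2 G3]]]|[H [G1 [G2 G3]]]] [[K [K1 [K2 K3]]]|[K [K1 [K2 K3]]]];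
  try lra.
  - destruct (Rtotal_order w w') as [h|[h|h]]; auto.
    + specialize (G3 w' Hw' h); lra.
    + specialize (K3 w Hw h); lra.
  - destruct (Rtotal_order w w') as [h|[h|h]]; auto.
    + specialize (K3 w Hw h); lra.
    + specialize (G3 w' Hw' h); lra.
Qed.

Lemma succ_shrink P q s p x : succ (q :: P) s p x -> In x P -> succ P s p x.
Proof.
  intros [[H [G1 [G2 G3]]]|[H [G1 [G2 G3]]]] Hx.
  - left; split; auto; repeat split; auto; intros; apply G3; simpl; auto.
  - right; split; auto; repeat split; auto; intros; apply G3; simpl; auto.
Qed.

Lemma succ_grow P q s p x : succ P s p x -> succ (q :: P) s p x \/ succ (q :: P) s p q.
Proof.
  intros [[H [G1 [G2 G3]]]|[H [G1 [G2 G3]]]].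
  - destruct (classic (p < q /\ q < x)) as [[h1 h2]|h].
    + right; left; split; auto; repeat split; simpl; auto.
      intros y [<-|Hy] Hpy; [lra|]. specialize (G3 y Hy Hpy); lra.
    + left; left; split; auto; repeat split; simpl; auto.
      intros y [<-|Hy] Hpy; [|auto]. destruct (Rle_dec x q); auto. exfalso; apply h; lra.
  - destruct (classic (x < q /\ q < p)) as [[h1 h2]|h].
    + right; right; split; auto; repeat split; simpl; auto.
      intros y [<-|Hy] Hpy; [lra|]. specialize (G3 y Hy Hpy); lra.
    + left; right; split; auto; repeat split; simpl; auto.
      intros y [<-|Hy] Hpy; [|auto]. destruct (Rle_dec q x); auto. exfalso; apply h; lra.
Qed.

Lemma succ_closer P q s w x : w <> s -> succ (q :: P) s w q -> succ P s w x ->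
  Rabs (q - w) <= Rabs (x - w).
Proof.
  intros Hw [[H [G1 [G2 G3]]]|[H [G1 [G2 G3]]]] [[K [K1 [K2 K3]]]|[K [K1 [K2 K3]]]];
  try lra.
  - specialize (G3 x ltac:(simpl; auto) K2). rabs.
  - specialize (G3 x ltac:(simpl; auto) K2). rabs.
Qed.


Definition upd (f : R -> R) (x v : R) : R -> R :=
  fun y => if Req_dec_T y x then v else f y.

Lemma opt_facts a L s rho : 0 < a -> In s L -> ~ one_sided L s ->
  structured_opt a L s rho ->
  (forall p, In p L -> 0 <= rho p) /\
  exists pst, (forall p, In p L -> p <> pst -> rho p = 0 \/ std L s p (rho p)) /\
    (forall t, std L s pst t -> t <= rho pst).
Proof.
  intros Ha Hs Hns [_ H]. specialize (H Hns).
  destruct H as [[Hra [Hfeas Hmin]] [par [pstar [Htree [HpsIn [Hrc [Hrcu [Hchain [Hreach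
    [ri [lj [Hri1 [Hri2 [Hri3 [Hlj1 [Hlj2 [Hlj3 [Hright Hleft]]]]]]]]]]]]]]]]]].
  split; [exact Hra|]. exists pstar.
  assert (Hout : forall c y, In c L -> succ L s y c ->
            ~ (Rabs (c - pstar) <= rho pstar /\ ~ between s pstar c) -> par c = y).
  { intros c y Hc Hy Hn.
    destruct (Rle_dec (Rabs (c - pstar)) (rho pstar)) as [Hr|Hr].
    - destruct (classic (between s pstar c)) as [Hb|Hb].
      + apply Hchain; auto. eapply succ_neq_s; eauto.
      + exfalso; apply Hn; auto.
    - destruct (Rlt_le_dec pstar c).
      + apply Hright; auto. rabs.
      + apply Hleft; auto. rabs. }
  assert (Hch : forall p c, In c L -> c <> s -> par c = p -> p <> pstar -> succ L s p c).
  { intros p c Hc Hcs Hpc Hp.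
    destruct (exists_pred L s c Hs Hc Hcs) as [y [Hy Hyc]].
    destruct (classic (Rabs (c - pstar) <= rho pstar /\ ~ between s pstar c)) as [[H1 H2]|Hn].
    - exfalso; apply Hp; rewrite <- Hpc; apply Hreach; auto.
    - rewrite <- Hpc, (Hout c y); auto. }
  split.
  - intros p Hp Hpp.
    destruct (classic (exists c, In c L /\ c <> s /\ par c = p)) as [[c [Hc [Hcs Hcp]]]|Hno].
    + right. assert (Hsc : succ L s p c) by (apply Hch; auto).
      assert (Hle : Rabs (c - p) <= rho p).
      { destruct (Htree c Hc Hcs) as [_ [h _]]. rewrite Hcp in h; exact h. }
      destruct (Rle_lt_or_eq_dec _ _ Hle) as [Hlt|Heq].
      2:{ left; exists c; split; auto. }
      exfalso.
      assert (Hcost : cost a L (upd rho p (Rabs (c - p))) < cost a L rho).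
      { apply cost_lt with p; auto.
        - intros y Hy; unfold upd; destruct (Req_dec_T y p); subst.
          + split; [apply Rabs_pos|lra].
          + split; [apply Hra; auto|lra].
        - unfold upd; destruct (Req_dec_T p p); [lra|congruence]. }
      assert (Hfe : feasible L s (upd rho p (Rabs (c - p)))).
      { exists par. intros x Hx Hxs. destruct (Htree x Hx Hxs) as [h1 [h2 h3]].
        split; auto. split; auto. unfold upd. destruct (Req_dec_T (par x) p) as [e|e]; auto.
        assert (Hsx : succ L s p x) by (apply Hch; auto).
        assert (x = c).
        { destruct (Req_dec p s) as [->|Hps].
          - destruct (classic ((s < x /\ s < c) \/ (x < s /\ c < s))) as [Hside|Hside].
            + eapply succ_unique_side; eauto.
            + exfalso. apply Hpp. apply Hrcu; auto. right; right. split; auto.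
              apply succ_side in Hsx; apply succ_side in Hsc.
              assert (x <> s) by auto.
              destruct (Rlt_le_dec x s).
              * assert (s < c) by (destruct Hsc as [_ [h|h]]; [lra|]; exfalso; apply Hside; right; lra).
                split.
                -- exists x; split; [repeat split; auto|lra].
                -- exists c; split; [repeat split; auto|lra].
              * assert (s < x) by lra.
                assert (c < s) by (destruct Hsc as [_ [h|h]]; [|lra]; exfalso; apply Hside; left; lra).
                split.
                -- exists c; split; [repeat split; auto|lra].
                -- exists x; split; [repeat split; auto|lra].
          - eapply succ_unique; eauto. }
        subst x. rewrite e; lra. }
      assert (Hra' : range_assignment L (upd rho p (Rabs (c - p)))).
      { intros y Hy; unfold upd; destruct (Req_dec_T y p); [apply Rabs_pos|apply Hra; auto]. }
      specialize (Hmin _ Hra' Hfe). lra.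
    + left. destruct (Hra p Hp) as [Hpos|Heq]; [|auto]. exfalso.
      assert (Hcost : cost a L (upd rho p 0) < cost a L rho).
      { apply cost_lt with p; auto.
        - intros y Hy; unfold upd; destruct (Req_dec_T y p); subst.
          + split; lra.
          + split; [apply Hra; auto|lra].
        - unfold upd; destruct (Req_dec_T p p); [lra|congruence]. }
      assert (Hfe : feasible L s (upd rho p 0)).
      { exists par. intros x Hx Hxs. destruct (Htree x Hx Hxs) as [h1 [h2 h3]].
        split; auto. split; auto. unfold upd. destruct (Req_dec_T (par x) p) as [e|e]; auto.
        exfalso; apply Hno; eauto. }
      assert (Hra' : range_assignment L (upd rho p 0)).
      { intros y Hy; unfold upd; destruct (Req_dec_T y p); [lra|apply Hra; auto]. }
      specialize (Hmin _ Hra' Hfe). lra.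
  - intros t [[c [Hc ->]]|[_ ->]]; [|apply Hra; auto].
    destruct (Rle_dec (Rabs (c - pstar)) (rho pstar)) as [h|h]; auto.
    assert (Hcs : c <> s) by (eapply succ_neq_s; eauto).
    assert (HcL : In c L) by (apply succ_side in Hc; tauto).
    assert (par c = pstar).
    { apply Hout; auto. intros [h1 _]; contradiction. }
    destruct (Htree c HcL Hcs) as [_ [h2 _]]. rewrite H in h2. lra.
Qed.

Lemma canon_abs a k L s r : 0 < a -> In s L -> canonical a k L s r ->
  (forall p, ~ In p L -> r p = 0) /\
  exists Zk pst, (length Zk <= k)%nat /\
   forall p, In p L -> p <> s ->
     (In p Zk -> r p = 0) /\
     (~ In p Zk -> (forall t, std L s p t -> t <= r p) /\ (p <> pst -> std L s p (r p))).
Proof.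
  intros Ha Hs [rhoopt [Hso [Hout [Hone Htwo]]]]. split; auto.
  destruct (classic (one_sided L s)) as [Hos|Hns].
  - exists [], s. split; [simpl; lia|]. intros p Hp Hps. split; [intros []|].
    intros _. destruct Hso as [Hso _].
    assert (Hst : std L s p (r p)) by (rewrite (Hone Hos p Hp); apply Hso; auto).
    split; auto. intros t Ht. rewrite (std_unique L s p t (r p)); auto; lra.
  - destruct (opt_facts a L s rhoopt Ha Hs Hns Hso) as [Hra [pst [F1 F2]]].
    destruct (Htwo Hns) as [Zk [_ [HZz [Hlen Hval]]]].
    exists Zk, pst. split.
    { destruct Hlen as [[_ h]|[h _]]; lia. }
    intros p Hp Hps. destruct (Hval p Hp) as [V1 [V2 V3]]. split; auto.
    intros HnZ.
    destruct (classic (zero_range L s rhoopt p)) as [Hz|Hz].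
    + assert (Hst : std L s p (r p)) by auto.
      split; auto. intros t Ht. rewrite (std_unique L s p t (r p)); auto; lra.
    + rewrite (V1 Hz).
      destruct (Req_dec p pst) as [->|Hpp].
      * split; auto. intros; contradiction.
      * destruct (F1 p Hp Hpp) as [H0|Hst].
        -- assert (Hex : extreme L s p).
           { apply NNPP; intro He; apply Hz; repeat split; auto. }
           destruct Hex as [_ [_ Hnx]].
           assert (Hst : std L s p (rhoopt p)) by (right; split; auto).
           split; auto. intros t Ht. rewrite (std_unique L s p t (rhoopt p)); auto; lra.
        -- split; auto. intros t Ht. rewrite (std_unique L s p t (rhoopt p)); auto; lra.
Qed.

Lemma count_cover (f g : R -> R) L C : NoDup L ->
  (forall p, In p L -> f p < g p -> In p C) -> (count_lt f g L <= length C)%nat.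
Proof.
  intros Hnd H. unfold count_lt. apply NoDup_incl_length.
  - apply NoDup_filter; auto.
  - intros x Hx. apply filter_In in Hx. destruct Hx as [Hx Hb].
    destruct (Rlt_dec (f x) (g x)); [apply H; auto|discriminate].
Qed.

Theorem lemma1 (alpha : R) (k : nat) (P : list R) (s q : R)
  (rold rnew : R -> R) :
  1 < alpha -> NoDup P -> In s P -> ~ In q P ->
  canonical alpha k P s rold ->
  canonical alpha k (q :: P) s rnew ->
  (count_lt rold rnew (q :: P) <= k + 3)%nat /\
  (count_lt rnew rold (q :: P) <= k + 3)%nat.
Proof.
  intros Ha Hnd Hs Hq Hco Hcn.
  assert (Ha0 : 0 < alpha) by lra.
  assert (HsQ : In s (q :: P)) by (right; auto).
  assert (HndQ : NoDup (q :: P)) by (constructor; auto).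
  assert (Hqs : q <> s) by (intro; subst; contradiction).
  destruct (canon_abs _ _ _ _ _ Ha0 Hs Hco) as [Hout_o [Zo [p1 [Hlo Ho]]]].
  destruct (canon_abs _ _ _ _ _ Ha0 HsQ Hcn) as [_ [Zn [p2 [Hln Hn]]]].
  assert (Hroq : rold q = 0) by auto.
  assert (Hro0 : forall p, In p P -> p <> s -> 0 <= rold p).
  { intros p Hp Hps. destruct (Ho p Hp Hps) as [h1 h2].
    destruct (classic (In p Zo)) as [h|h]; [rewrite h1; auto; lra|].
    destruct (std_exists P s p) as [t [Ht Ht0]]. specialize (proj1 (h2 h) t Ht); lra. }
  assert (Hrn0 : forall p, In p (q :: P) -> p <> s -> 0 <= rnew p).
  { intros p Hp Hps. destruct (Hn p Hp Hps) as [h1 h2].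
    destruct (classic (In p Zn)) as [h|h]; [rewrite h1; auto; lra|].
    destruct (std_exists (q :: P) s p) as [t [Ht Ht0]]. specialize (proj1 (h2 h) t Ht); lra. }
  split.
  -
    assert (Hcl : forall p, In p (q :: P) -> rold p < rnew p ->
      p = s \/ In p Zo \/ p = p2 \/ p = q \/
      (In p P /\ p <> s /\ succ (q :: P) s p q /\ ~ In p Zo /\ p <> p2 /\ rold p < rnew p)).
    { intros p Hp Hinc.
      destruct (Req_dec p s) as [|Hps]; [left; auto|].
      destruct (classic (In p Zo)) as [|HpZ]; [right; left; auto|].
      destruct (Req_dec p p2) as [|Hp2]; [right; right; left; auto|].
      destruct Hp as [<-|HpP]; [right; right; right; left; auto|].
      right; right; right; right.
      destruct (Hn p (or_intror HpP) Hps) as [n1 n2].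
      destruct (classic (In p Zn)) as [HZn|HZn].
      { rewrite (n1 HZn) in Hinc. specialize (Hro0 p HpP Hps). lra. }
      destruct (n2 HZn) as [_ n3]. specialize (n3 Hp2).
      destruct n3 as [[x [Hx Heq]]|[_ Heq]].
      - destruct (Req_dec x q) as [->|Hxq].
        + repeat split; auto.
        + exfalso. assert (HxP : In x P).
          { apply succ_side in Hx. destruct Hx as [[h|h] _]; [congruence|auto]. }
          assert (Hs' : succ P s p x) by (eapply succ_shrink; eauto).
          destruct (Ho p HpP Hps) as [_ o2]. destruct (o2 HpZ) as [o3 _].
          assert (Rabs (x - p) <= rold p) by (apply o3; left; eauto). lra.
      - specialize (Hro0 p HpP Hps). lra. }
    destruct (classic (exists w, In w P /\ w <> s /\ succ (q :: P) s w q /\ ~ In w Zo /\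
                       w <> p2 /\ rold w < rnew w)) as [[w [HwP [Hws [Hwq [HwZ [Hw2 Hwinc]]]]]]|Hnw].
    +
      assert (Hqinc : q <> p2 -> ~ rold q < rnew q).
      { intros Hq2 Hqi.
        destruct (Hn w (or_intror HwP) Hws) as [n1 n2].
        assert (HwZn : ~ In w Zn).
        { intro h. rewrite (n1 h) in Hwinc. specialize (Hro0 w HwP Hws). lra. }
        assert (Hrw : rnew w = Rabs (q - w)).
        { apply (std_unique (q :: P) s w); [exact Hws| |].
          - apply (proj2 (n2 HwZn)); auto.
          - left; exists q; split; auto. }
        assert (Hnos : ~ exists x, succ P s w x).
        { intros [x Hx]. destruct (Ho w HwP Hws) as [_ o2]. destruct (o2 HwZ) as [o3 _].
          assert (Rabs (x - w) <= rold w) by (apply o3; left; eauto).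
          assert (Rabs (q - w) <= Rabs (x - w)) by (apply (succ_closer P q s w x Hws Hwq Hx)). lra. }
        assert (Hnoq : forall y, ~ succ (q :: P) s q y).
        { intros y Hy. apply Hnos.
          assert (HyQ := succ_side _ _ _ _ Hy).
          assert (HwQ := succ_side _ _ _ _ Hwq).
          destruct HyQ as [[h|HyP] Hys]; [subst; lra|].
          destruct HwQ as [_ Hws'].
          destruct Hws' as [[h1 h2]|[h1 h2]].
          - assert (h3 : q < y) by (destruct Hys as [[g1 g2]|[g1 g2]]; [lra|]; lra).
            destruct (exists_next_right P w y HyP ltac:(lra)) as [x Hx].
            exists x; left; split; auto.
          - assert (h3 : y < q) by (destruct Hys as [[g1 g2]|[g1 g2]]; [|lra]; lra).
            destruct (exists_next_left P w y HyP ltac:(lra)) as [x Hx].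
            exists x; right; split; auto. }
        destruct (Hn q (or_introl eq_refl) Hqs) as [m1 m2].
        destruct (classic (In q Zn)) as [h|h].
        - rewrite (m1 h), Hroq in Hqi. lra.
        - destruct (proj2 (m2 h) Hq2) as [[y [Hy _]]|[_ Heq]].
          + apply (Hnoq y Hy).
          + rewrite Heq, Hroq in Hqi. lra. }
      apply Nat.le_trans with (length (Zo ++ [s; p2; w])).
      * apply count_cover; auto. intros p Hp Hinc. apply in_or_app.
        destruct (Hcl p Hp Hinc) as [h|[h|[h|[h|[h1 [h2 [h3 _]]]]]]].
        -- right; simpl; auto.
        -- left; auto.
        -- right; simpl; auto.
        -- subst p. destruct (Req_dec q p2) as [e|e]; [right; simpl; auto|].
           exfalso; apply (Hqinc e Hinc).
        -- right. assert (p = w) by (apply (pred_unique (q :: P) s p w q); simpl; auto).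
           simpl; auto.
      * rewrite length_app; simpl; lia.
    + apply Nat.le_trans with (length (Zo ++ [s; p2; q])).
      * apply count_cover; auto. intros p Hp Hinc. apply in_or_app.
        destruct (Hcl p Hp Hinc) as [h|[h|[h|[h|h]]]].
        -- right; simpl; auto.
        -- left; auto.
        -- right; simpl; auto.
        -- right; simpl; auto.
        -- exfalso; apply Hnw; exists p; auto.
      * rewrite length_app; simpl; lia.
  -
    assert (Hcl : forall p, In p (q :: P) -> rnew p < rold p ->
      p = s \/ In p Zn \/ p = p1 \/ (In p P /\ p <> s /\ succ (q :: P) s p q)).
    { intros p Hp Hdec.
      destruct (Req_dec p s) as [|Hps]; [left; auto|].
      destruct Hp as [<-|HpP].
      { exfalso. specialize (Hrn0 q (or_introl eq_refl) Hps). lra. }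
      destruct (classic (In p Zn)) as [|HpZ]; [right; left; auto|].
      destruct (Req_dec p p1) as [|Hp1]; [right; right; left; auto|].
      right; right; right. split; auto. split; auto.
      destruct (Hn p (or_intror HpP) Hps) as [_ n2]. destruct (n2 HpZ) as [n3 _].
      destruct (Ho p HpP Hps) as [o1 o2].
      destruct (classic (In p Zo)) as [HZo|HZo].
      { rewrite (o1 HZo) in Hdec. specialize (Hrn0 p (or_intror HpP) Hps). lra. }
      destruct (proj2 (o2 HZo) Hp1) as [[x [Hx Heq]]|[_ Heq]].
      - destruct (succ_grow P q s p x Hx) as [Hx'|Hx']; auto.
        exfalso. assert (Rabs (x - p) <= rnew p) by (apply n3; left; eauto). lra.
      - exfalso. specialize (Hrn0 p (or_intror HpP) Hps). lra. }
    destruct (classic (exists w, In w P /\ w <> s /\ succ (q :: P) s w q))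
      as [[w [HwP [Hws Hwq]]]|Hnw].
    + apply Nat.le_trans with (length (Zn ++ [s; p1; w])).
      * apply count_cover; auto. intros p Hp Hdec. apply in_or_app.
        destruct (Hcl p Hp Hdec) as [h|[h|[h|[h1 [h2 h3]]]]].
        -- right; simpl; auto.
        -- left; auto.
        -- right; simpl; auto.
        -- right. assert (p = w) by (apply (pred_unique (q :: P) s p w q); simpl; auto).
           simpl; auto.
      * rewrite length_app; simpl; lia.
    + apply Nat.le_trans with (length (Zn ++ [s; p1; s])).
      * apply count_cover; auto. intros p Hp Hdec. apply in_or_app.
        destruct (Hcl p Hp Hdec) as [h|[h|[h|h]]].
        -- right; simpl; auto.
        -- left; auto.
        -- right; simpl; auto.
        -- exfalso; apply Hnw; exists p; auto.
      * rewrite length_app; simpl; lia.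
Qed.
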